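(* Let $a>0$. If $\phi\in\mathcal D[0,\infty)$ is absolutely continuous on every compact interval $[0,T]$, then so is $\Lambda_a(\phi)$.
   Context: $\mathcal D[0,\infty)$ is the space of right-continuous functions $[0,\infty)\to\mathbb R$ with left limits. Notation: $x^+=\max(x,0)$, $x\wedge y=\min(x,y)$. For $a>0$, $\Lambda_a(\phi)(t)=\phi(t)-\sup_{s\in[0,t]}\big[(\phi(s)-a)^+\wedge\inf_{u\in[s,t]}\phi(u)\big]$. *)

(* Defs.v *)
From Stdlib Require Import Reals Lra List Classical ClassicalEpsilon.
Open Scope R_scope.

(* Supremum of a set of reals: the least upper bound when the set is
   nonempty and bounded above (junk value 0 otherwise). *)
Definition Rsup (E : R -> Prop) : R :=
  match excluded_middle_informative (bound E /\ exists x, E x) with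
  | left H => proj1_sig (completeness E (proj1 H) (proj2 H))
  | right _ => 0
  end.

Definition Rinf (E : R -> Prop) : R := - Rsup (fun y => E (- y)).

Definition Rpos (x : R) : R := Rmax x 0.

Definition Lambda (a : R) (phi : R -> R) (t : R) : R :=
  phi t - Rsup (fun y => exists s, 0 <= s <= t /\
     y = Rmin (Rpos (phi s - a))
              (Rinf (fun z => exists u, s <= u <= t /\ z = phi u))).

Definition cadlag (phi : R -> R) : Prop :=
  (forall t, 0 <= t -> forall eps, eps > 0 -> exists delta, delta > 0 /\
       forall s, t <= s < t + delta -> Rabs (phi s - phi t) < eps) /\
  (forall t, 0 < t -> exists L, forall eps, eps > 0 -> exists delta, delta > 0 /\
       forall s, 0 <= s -> t - delta < s < t -> Rabs (phi s - L) < eps).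

Definition abs_cont_on (f : R -> R) (a b : R) : Prop :=
  forall eps, eps > 0 -> exists delta, delta > 0 /\
    forall l : list (R * R),
      (forall p, In p l -> a <= fst p /\ fst p <= snd p /\ snd p <= b) ->
      ForallOrdPairs (fun p q => snd p <= fst q \/ snd q <= fst p) l ->
      fold_right Rplus 0 (map (fun p => snd p - fst p) l) < delta ->
      fold_right Rplus 0 (map (fun p => Rabs (f (snd p) - f (fst p))) l) < eps.

(* Main.v *)
Require Import Defs.
From Stdlib Require Import Reals Lra List Classical ClassicalEpsilon.
Open Scope R_scope.

Lemma Rabs_le_inv x b : Rabs x <= b -> - b <= x <= b.
Proof. unfold Rabs; destruct Rcase_abs; intros; lra. Qed.

Lemma Rsup_spec (E : R -> Prop) : bound E -> (exists x, E x) -> is_lub E (Rsup E).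
Proof.
  intros Hb Hn. unfold Rsup.
  destruct (excluded_middle_informative _) as [H|H].
  - destruct (completeness E (proj1 H) (proj2 H)) as [m Hm]. exact Hm.
  - exfalso. apply H. split; assumption.
Qed.

Lemma Rsup_ub (E : R -> Prop) (B : R) x :
  (forall y, E y -> y <= B) -> E x -> x <= Rsup E.
Proof.
  intros Hb Hx. destruct (Rsup_spec E) as [H1 H2].
  - exists B. exact Hb.
  - exists x; exact Hx.
  - apply H1; exact Hx.
Qed.

Lemma Rsup_le (E : R -> Prop) (B : R) b :
  (forall y, E y -> y <= B) -> (exists x, E x) -> (forall y, E y -> y <= b) -> Rsup E <= b.
Proof.
  intros Hb Hn Hc. destruct (Rsup_spec E) as [H1 H2].
  - exists B. exact Hb.
  - exact Hn.
  - apply H2. exact Hc.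
Qed.

Lemma Rinf_lb (E : R -> Prop) (c : R) x :
  (forall y, E y -> c <= y) -> E x -> Rinf E <= x.
Proof.
  intros Hc Hx. unfold Rinf.
  assert (-x <= Rsup (fun y => E (- y))).
  { apply Rsup_ub with (B := -c).
    - intros y Hy. specialize (Hc _ Hy). lra.
    - rewrite Ropp_involutive. exact Hx. }
  lra.
Qed.

Lemma Rinf_ge (E : R -> Prop) (c : R) b :
  (forall y, E y -> c <= y) -> (exists x, E x) -> (forall y, E y -> b <= y) -> b <= Rinf E.
Proof.
  intros Hc [x Hx] Hb. unfold Rinf.
  assert (Rsup (fun y => E (- y)) <= -b).
  { apply Rsup_le with (B := -c).
    - intros y Hy. specialize (Hc _ Hy). lra.
    - exists (-x). rewrite Ropp_involutive. exact Hx.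
    - intros y Hy. specialize (Hb _ Hy). lra. }
  lra.
Qed.

Definition mI (phi : R -> R) r t := Rinf (fun z => exists u, r <= u <= t /\ z = phi u).
Definition termI a (phi : R -> R) t r := Rmin (Rpos (phi r - a)) (mI phi r t).
Definition SI a (phi : R -> R) t :=
  Rsup (fun y => exists s, 0 <= s <= t /\ y = termI a phi t s).

Lemma Lambda_eq a phi t : Lambda a phi t = phi t - SI a phi t.
Proof. reflexivity. Qed.

Section K.
Lemma m_le phi B T r t u : (forall v, 0 <= v <= T -> Rabs (phi v) <= B) ->
  0 <= r -> t <= T -> r <= u <= t -> mI phi r t <= phi u.
Proof.
  intros HB Hr Ht Hu. unfold mI. apply Rinf_lb with (c := -B).
  - intros y [v [Hv ->]]. assert (Rabs (phi v) <= B) by (apply HB; lra).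
    apply Rabs_le_inv in H. lra.
  - exists u; split; [lra|reflexivity].
Qed.

Lemma m_ge phi B T r t c : (forall v, 0 <= v <= T -> Rabs (phi v) <= B) ->
  0 <= r -> r <= t -> t <= T -> (forall u, r <= u <= t -> c <= phi u) -> c <= mI phi r t.
Proof.
  intros HB Hr Hrt Ht Hc. unfold mI. apply Rinf_ge with (c := -B).
  - intros y [v [Hv ->]]. assert (Rabs (phi v) <= B) by (apply HB; lra).
    apply Rabs_le_inv in H. lra.
  - exists (phi r). exists r; split; [lra|reflexivity].
  - intros y [v [Hv ->]]. apply Hc; lra.
Qed.

Lemma S_ge a phi B T t r : (forall v, 0 <= v <= T -> Rabs (phi v) <= B) ->
  0 <= t -> t <= T -> 0 <= r <= t -> termI a phi t r <= SI a phi t.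
Proof.
  intros HB Ht0 Ht Hr. unfold SI. apply Rsup_ub with (B := B).
  - intros y [s [Hs ->]]. unfold termI.
    assert (mI phi s t <= phi t) by (apply m_le with B T; try assumption; lra).
    assert (Rabs (phi t) <= B) by (apply HB; lra).
    apply Rabs_le_inv in H0. unfold Rmin; destruct Rle_dec; lra.
  - exists r; split; [lra|reflexivity].
Qed.

Lemma S_le a phi B T t b : (forall v, 0 <= v <= T -> Rabs (phi v) <= B) ->
  0 <= t -> t <= T -> (forall r, 0 <= r <= t -> termI a phi t r <= b) -> SI a phi t <= b.
Proof.
  intros HB Ht0 Ht Hb. unfold SI. apply Rsup_le with (B := B).
  - intros y [s [Hs ->]]. unfold termI.
    assert (mI phi s t <= phi t) by (apply m_le with B T; try assumption; lra).
    assert (Rabs (phi t) <= B) by (apply HB; lra).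
    apply Rabs_le_inv in H0. unfold Rmin; destruct Rle_dec; lra.
  - exists (termI a phi t 0). exists 0; split; [lra|reflexivity].
  - intros y [s [Hs ->]]. apply Hb; lra.
Qed.

Lemma keyS a phi B T s t M : (forall v, 0 <= v <= T -> Rabs (phi v) <= B) ->
  0 <= s -> s <= t -> t <= T ->
  (forall u, s <= u <= t -> Rabs (phi u - phi s) <= M) ->
  Rabs (SI a phi t - SI a phi s) <= M.
Proof.
  intros HB Hs Hst Ht HM.
  assert (HM0 : 0 <= M).
  { specialize (HM s ltac:(lra)). replace (phi s - phi s) with 0 in HM by ring.
    rewrite Rabs_R0 in HM. exact HM. }
  assert (HMu : forall u, s <= u <= t -> phi s - M <= phi u <= phi s + M).
  { intros u Hu. specialize (HM u Hu). apply Rabs_le_inv in HM. lra. }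
  assert (A : SI a phi s <= SI a phi t + M).
  { apply S_le with B T; try assumption; try lra.
    intros r Hr.
    assert (H1 : mI phi r s <= phi s) by (apply m_le with B T; try assumption; lra).
    assert (H2 : Rmin (mI phi r s) (phi s - M) <= mI phi r t).
    { apply m_ge with B T; try assumption; try lra. intros u Hu.
      destruct (Rle_dec u s).
      - assert (mI phi r s <= phi u) by (apply m_le with B T; try assumption; lra).
        unfold Rmin; destruct Rle_dec; lra.
      - assert (phi s - M <= phi u) by (apply HMu; lra).
        unfold Rmin; destruct Rle_dec; lra. }
    assert (H3 : termI a phi t r <= SI a phi t) by (apply S_ge with B T; try assumption; lra).
    unfold termI in *. revert H1 H2 H3.
    unfold Rmin; repeat destruct Rle_dec; intros; lra. }
  assert (Bq : SI a phi t <= SI a phi s + M).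
  { apply S_le with B T; try assumption; try lra.
    intros r Hr. destruct (Rle_dec r s).
    - assert (H1 : mI phi r t <= mI phi r s).
      { apply m_ge with B T; try assumption; try lra. intros u Hu. apply m_le with B T; try assumption; lra. }
      assert (H3 : termI a phi s r <= SI a phi s) by (apply S_ge with B T; try assumption; lra).
      unfold termI in *. revert H1 H3.
      unfold Rmin; repeat destruct Rle_dec; intros; lra.
    - assert (H3 : termI a phi s s <= SI a phi s) by (apply S_ge with B T; try assumption; lra).
      assert (H4 : mI phi s s = phi s).
      { apply Rle_antisym. apply m_le with B T; try assumption; lra.
        apply m_ge with B T; try assumption; try lra. intros u Hu. replace u with s by lra. lra. }
      assert (H5 : mI phi r t <= phi r) by (apply m_le with B T; try assumption; lra).
      assert (H6 : phi r <= phi s + M) by (apply HMu; lra).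
      unfold termI in *. rewrite H4 in H3. revert H3 H5 H6.
      unfold Rmin, Rpos, Rmax; repeat destruct Rle_dec; intros; lra. }
  apply Rabs_le. lra.
Qed.

Lemma pointS a phi B T s t eta : (forall v, 0 <= v <= T -> Rabs (phi v) <= B) ->
  0 <= s -> s <= t -> t <= T -> eta > 0 ->
  exists u, s <= u <= t /\ Rabs (SI a phi t - SI a phi s) <= Rabs (phi u - phi s) + eta.
Proof.
  intros HB Hs Hst Ht He.
  apply NNPP. intro Hn.
  assert (Hall : forall u, s <= u <= t ->
     Rabs (phi u - phi s) <= Rabs (SI a phi t - SI a phi s) - eta).
  { intros u Hu. apply Rnot_lt_le. intro Hc. apply Hn. exists u. split; [lra|lra]. }
  pose proof (keyS a phi B T s t _ HB Hs Hst Ht Hall). lra.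
Qed.

Lemma ac_bounded phi T : 0 <= T -> abs_cont_on phi 0 T ->
  exists B, forall v, 0 <= v <= T -> Rabs (phi v) <= B.
Proof.
  intros HT Hac. destruct (Hac 1 ltac:(lra)) as [d [Hd Hl]].
  assert (Hind : forall n : nat, forall x, 0 <= x <= T -> x <= INR n * (d/2) ->
            Rabs (phi x - phi 0) <= INR n).
  { induction n as [|n IH]; intros x Hx Hxn.
    - simpl in *. replace x with 0 by lra. replace (phi 0 - phi 0) with 0 by ring.
      rewrite Rabs_R0; lra.
    - rewrite S_INR in *. destruct (Rle_dec x (INR n * (d/2))).
      + specialize (IH x Hx r). lra.
      + set (x' := Rmax 0 (x - d/2)).
        assert (Hx' : 0 <= x' <= x /\ x - x' <= d/2 /\ x' <= INR n * (d/2)).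
        { unfold x', Rmax; destruct Rle_dec; pose proof (pos_INR n); nra. }
        specialize (IH x' ltac:(lra) ltac:(lra)).
        specialize (Hl ((x', x) :: nil)).
        simpl in Hl.
        assert (Rabs (phi x - phi x') + 0 < 1).
        { apply Hl.
          - intros p [<-|[]]. simpl. lra.
          - constructor; constructor.
          - lra. }
        replace (phi x - phi 0) with ((phi x - phi x') + (phi x' - phi 0)) by ring.
        eapply Rle_trans. apply Rabs_triang. lra. }
  destruct (INR_archimed (d/2) T ltac:(lra)) as [n Hn].
  exists (Rabs (phi 0) + INR n). intros v Hv.
  specialize (Hind n v Hv ltac:(lra)).
  replace (phi v) with ((phi v - phi 0) + phi 0) by ring.
  eapply Rle_trans. apply Rabs_triang. lra.
Qed.
End K.

Definition sub (p p' : R * R) := fst p <= fst p' /\ fst p' <= snd p' /\ snd p' <= snd p.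
Definition disj (p q : R * R) := snd p <= fst q \/ snd q <= fst p.

Lemma sub_disj_forall p p' l l' : sub p p' -> Forall2 sub l l' -> Forall (disj p) l ->
  Forall (disj p') l'.
Proof.
  intros Hp H2. induction H2; intros Hf; constructor.
  - inversion Hf; subst. unfold sub, disj in *. lra.
  - apply IHForall2. inversion Hf; auto.
Qed.

Lemma sub_disj l l' : Forall2 sub l l' -> ForallOrdPairs disj l -> ForallOrdPairs disj l'.
Proof.
  intros H2. induction H2; intros Hf; constructor.
  - inversion Hf; subst. eapply sub_disj_forall; eauto.
  - apply IHForall2. inversion Hf; auto.
Qed.

Lemma sub_in l l' T : Forall2 sub l l' ->
  (forall p, In p l -> 0 <= fst p /\ fst p <= snd p /\ snd p <= T) ->
  (forall p, In p l' -> 0 <= fst p /\ fst p <= snd p /\ snd p <= T).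
Proof.
  intros H2. induction H2; intros Hin p Hp; simpl in Hp.
  - destruct Hp.
  - destruct Hp as [<-|Hp].
    + specialize (Hin x (or_introl eq_refl)). unfold sub in *. lra.
    + apply IHForall2; auto. intros q Hq. apply Hin. right; auto.
Qed.

Lemma sub_len l l' : Forall2 sub l l' ->
  fold_right Rplus 0 (map (fun p => snd p - fst p) l') <=
  fold_right Rplus 0 (map (fun p => snd p - fst p) l).
Proof.
  intros H2. induction H2; simpl. lra. unfold sub in *. lra.
Qed.

Lemma sum_split (F G H : R * R -> R) l : (forall p, In p l -> F p <= G p + H p) ->
  fold_right Rplus 0 (map F l) <= fold_right Rplus 0 (map G l) + fold_right Rplus 0 (map H l).
Proof.
  induction l as [|p l IH]; intros Hp; simpl. lra.
  assert (F p <= G p + H p) by (apply Hp; left; auto).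
  assert (fold_right Rplus 0 (map F l) <= fold_right Rplus 0 (map G l) + fold_right Rplus 0 (map H l))
    by (apply IH; intros; apply Hp; right; auto).
  lra.
Qed.

Lemma build a phi B T l : (forall v, 0 <= v <= T -> Rabs (phi v) <= B) ->
  (forall p, In p l -> 0 <= fst p /\ fst p <= snd p /\ snd p <= T) ->
  forall eta, eta > 0 -> exists l', Forall2 sub l l' /\
    fold_right Rplus 0 (map (fun p => Rabs (SI a phi (snd p) - SI a phi (fst p))) l) <=
    fold_right Rplus 0 (map (fun p => Rabs (phi (snd p) - phi (fst p))) l') + eta.
Proof.
  intros HB. induction l as [|p l IH]; intros Hin eta He.
  - exists nil. split. constructor. simpl. lra.
  - destruct (Hin p (or_introl eq_refl)) as [H1 [H2 H3]].
    destruct (pointS a phi B T (fst p) (snd p) (eta/2) HB H1 H2 H3 ltac:(lra)) as [u [Hu Hu2]].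
    destruct (IH (fun q Hq => Hin q (or_intror Hq)) (eta/2) ltac:(lra)) as [l' [Hl' Hs]].
    exists ((fst p, u) :: l'). split.
    + constructor; auto. unfold sub; simpl; lra.
    + simpl. lra.
Qed.

Theorem corollary2p3 (a : R) (phi : R -> R) :
  a > 0 ->
  cadlag phi ->
  (forall T, 0 <= T -> abs_cont_on phi 0 T) ->
  forall T, 0 <= T -> abs_cont_on (Lambda a phi) 0 T.
Proof.
  intros Ha Hc Hac T HT eps He.
  destruct (ac_bounded phi T HT (Hac T HT)) as [B HB].
  destruct (Hac T HT (eps/4) ltac:(lra)) as [d [Hd Hl]].
  exists d. split; [exact Hd|]. intros l Hin Hdisj Hlen.
  destruct (build a phi B T l HB Hin (eps/4) ltac:(lra)) as [l' [H2 Hs]].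
  assert (Hl1 := Hl l Hin Hdisj Hlen).
  assert (Hl2 : fold_right Rplus 0 (map (fun p => Rabs (phi (snd p) - phi (fst p))) l') < eps/4).
  { apply Hl.
    - apply (sub_in l l' T H2). intros p Hp; destruct (Hin p Hp); split; lra.
    - apply (sub_disj l l' H2). exact Hdisj.
    - pose proof (sub_len l l' H2). lra. }
  eapply Rle_lt_trans.
  { apply (sum_split _ (fun p => Rabs (phi (snd p) - phi (fst p)))
                       (fun p => Rabs (SI a phi (snd p) - SI a phi (fst p)))).
    intros p _. rewrite !Lambda_eq.
    replace (phi (snd p) - SI a phi (snd p) - (phi (fst p) - SI a phi (fst p)))
      with ((phi (snd p) - phi (fst p)) + - (SI a phi (snd p) - SI a phi (fst p))) by ring.
    eapply Rle_trans. apply Rabs_triang. rewrite Rabs_Ropp. lra. }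
  lra.
Qed.
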